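(* Let $(G,c)$ be a W-state graph, and let $X$ and $X'$ be the vertex sets of the two connected components of the spanning subgraph $G_m=(V(G),E_m(G))$ of monochromatic edges. If $\min(|X|,|X'|)\ge 3$, then $G$ is bicritical.
   Context: Graphs may have parallel edges but no loops. A half-edge $2$-colouring $c$ of $G$ assigns to each pair $(e,w)$ with $w$ an endpoint of edge $e$ a colour in $\{0,1\}$ (0 = blue, 1 = red). An edge $e=uv$ is bichromatic if $c(e,u)\neq c(e,v)$ and monochromatic otherwise; $E_m(G)$ is the set of monochromatic edges; standing convention: monochromatic edges are blue at both ends. A graph is matching-covered if every edge lies in some perfect matching. A W-state graph is a half-edge $2$-coloured matching-covered graph $(G,c)$ in which every perfect matching contains exactly one bichromatic edge, and every vertex $v$ is incident with an edge $e$ with $c(e,v)=1$. For any W-state graph, $G_m$ has exactly two connected components. A graph $G$ with $|V(G)|\ge 4$ is bicritical if $G-\{u,v\}$ has a perfect matching for all distinct $u,v\in V(G)$. *)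

(* Defs.v *)
(* Parallel edges are allowed (distinct edges may have the same endpoints).
   A half-edge 2-colouring is c : E -> V -> bool, where only the values
   c e (src e) and c e (dst e) are meaningful (true = 1 = red, false = 0 = blue). *)
From mathcomp Require Import all_boot.
Set Implicit Arguments. Unset Strict Implicit. Unset Printing Implicit Defensive.

Section Graphs.
Variables (V E : finType) (src dst : E -> V).

Definition loopless : Prop := forall e, src e != dst e.

Definition incident (e : E) (v : V) : bool := (src e == v) || (dst e == v).

Definition perfect_matching_avoiding (S : {set V}) (M : {set E}) : Prop :=
  (forall e, e \in M -> forall v, v \in S -> ~~ incident e v) /\
  (forall v, v \notin S -> #|[set e in M | incident e v]| = 1).

Definition perfect_matching (M : {set E}) : Prop :=
  perfect_matching_avoiding set0 M.

Definition matching_covered : Prop :=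
  forall e, exists M, perfect_matching M /\ e \in M.

Definition bicritical : Prop :=
  4 <= #|V| /\
  forall u v : V, u != v ->
    exists M, perfect_matching_avoiding [set u; v] M.

Variable c : E -> V -> bool.

Definition bichromatic (e : E) : bool := c e (src e) != c e (dst e).
Definition monochromatic (e : E) : bool := c e (src e) == c e (dst e).

Definition mono_blue : Prop :=
  forall e, monochromatic e -> c e (src e) = false /\ c e (dst e) = false.

Definition W_state : Prop :=
  matching_covered /\
  (forall M, perfect_matching M -> #|[set e in M | bichromatic e]| = 1) /\
  (forall v, exists e, incident e v /\ c e v = true).

Definition madj : rel V :=
  fun x y => [exists e, monochromatic e &&
      (((src e == x) && (dst e == y)) || ((src e == y) && (dst e == x)))].

Definition mcomponent (X : {set V}) : Prop :=
  exists x, X = [set y | connect madj x y].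

End Graphs.

(* Main.v *)
Require Import Defs.
From mathcomp Require Import all_boot.
Set Implicit Arguments. Unset Strict Implicit. Unset Printing Implicit Defensive.

Section Basic.
Variables (V E : finType) (src dst : E -> V) (c : E -> V -> bool).
Hypothesis Hloop : loopless src dst.

Local Notation inc := (incident src dst).
Local Notation PM := (perfect_matching src dst).

Lemma card1I (P : pred E) : (exists e, P e) ->
  (forall e1 e2, P e1 -> P e2 -> e1 = e2) -> #|[set e | P e]| = 1.
Proof.
move=> [e Pe] U; have -> : [set e | P e] = [set e].
  by apply/setP=> x; rewrite !inE; apply/idP/eqP=> [Px|->//]; apply: U.
by rewrite cards1.
Qed.

Lemma pm_ex M v : PM M -> exists2 e, e \in M & inc e v.
Proof.
move=> [_ H]; have := H v (ltac:(by rewrite in_set0)); move/eqP/cards1P=> [e He].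
have : e \in [set e0 in M | inc e0 v] by rewrite He in_set1.
by rewrite inE => /andP[? ?]; exists e.
Qed.

Lemma pm_uniq M v e1 e2 : PM M -> e1 \in M -> e2 \in M -> inc e1 v -> inc e2 v -> e1 = e2.
Proof.
move=> [_ H] m1 m2 i1 i2; have := H v (ltac:(by rewrite in_set0)); move/eqP/cards1P=> [e He].
have : e1 \in [set e0 in M | inc e0 v] by rewrite inE m1 i1.
have : e2 \in [set e0 in M | inc e0 v] by rewrite inE m2 i2.
by rewrite He !in_set1 => /eqP-> /eqP->.
Qed.

Lemma pmA_intro (S : {set V}) (M : {set E}) :
  (forall e, e \in M -> forall v, v \in S -> ~~ inc e v) ->
  (forall v, v \notin S -> exists2 e, e \in M & inc e v) ->
  (forall v e1 e2, v \notin S -> e1 \in M -> e2 \in M -> inc e1 v -> inc e2 v -> e1 = e2) ->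
  perfect_matching_avoiding src dst S M.
Proof.
move=> H1 H2 H3; split=> // v vS; apply: card1I.
  by have [e eM ie] := H2 v vS; exists e; rewrite eM ie.
by move=> e1 e2 /andP[m1 i1] /andP[m2 i2]; apply: (H3 v).
Qed.

Lemma inc_nat e v : (inc e v : nat) = (src e == v) + (dst e == v).
Proof.
rewrite /incident; have := Hloop e.
by case: (src e =P v) => [<-|]; case: (dst e =P src e) => [->|] //=; rewrite eqxx.
Qed.

Lemma sum_eq_in (K : {set V}) (a : V) : \sum_(v in K) (a == v : nat) = (a \in K).
Proof.
rewrite big_mkcond /= (bigD1 a) //= eqxx big1 ?addn0.
  by case: (a \in K).
by move=> i /negPf; rewrite eq_sym => ->; case: (i \in K).
Qed.

Lemma count_K (M : {set E}) (K : {set V}) : PM M ->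
  #|K| = \sum_(e in M) ((src e \in K) + (dst e \in K)).
Proof.
move=> pm.
have E1 : forall v, \sum_(e in M) (inc e v : nat) = 1.
  move=> v; have [_ H] := pm; rewrite -(H v (ltac:(by rewrite in_set0))) -sum1_card.
  rewrite [LHS]big_mkcond [RHS]big_mkcond /=; apply: eq_bigr => e _.
  by rewrite inE; case: (e \in M); case: (inc e v).
rewrite -sum1_card (eq_bigr (fun v => \sum_(e in M) (inc e v : nat))); last by move=> v _; rewrite E1.
rewrite exchange_big /=; apply: eq_bigr => e _.
rewrite (eq_bigr (fun v => (src e == v) + (dst e == v))); last by move=> v _; rewrite inc_nat.
by rewrite big_split /= !sum_eq_in.
Qed.

End Basic.

Section W.
Variables (V E : finType) (src dst : E -> V) (c : E -> V -> bool).
Hypotheses (Hloop : loopless src dst) (Hmb : mono_blue src dst c)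
  (HW : W_state src dst c).

Local Notation inc := (incident src dst).
Local Notation PM := (perfect_matching src dst).
Local Notation mono := (monochromatic src dst c).
Local Notation bich := (bichromatic src dst c).
Local Notation madj := (madj src dst c).

Lemma bichE e : bich e = ~~ mono e.
Proof. by []. Qed.

Lemma pm_bich_uniq M g1 g2 : PM M -> g1 \in M -> g2 \in M -> bich g1 -> bich g2 -> g1 = g2.
Proof.
move=> pm m1 m2 b1 b2; have [_ [H _]] := HW; move/eqP/cards1P: (H M pm) => [g Hg].
have : g1 \in [set e in M | bich e] by rewrite inE m1 b1.
have : g2 \in [set e in M | bich e] by rewrite inE m2 b2.
by rewrite Hg !in_set1 => /eqP-> /eqP->.
Qed.

Lemma pm_one_bich M : PM M ->
  exists g, [/\ g \in M, bich g & forall e, e \in M -> e != g -> mono e].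
Proof.
move=> pm; have [_ [H _]] := HW; move/eqP/cards1P: (H M pm) => [g Hg].
have : g \in [set e in M | bich e] by rewrite Hg in_set1.
rewrite inE => /andP[gM bg]; exists g; split=> // e eM neg.
rewrite -[mono e]negbK -bichE; apply/negP=> be.
by move/eqP: neg; apply; apply: (pm_bich_uniq (M := M)).
Qed.

Lemma red_pm x : exists M g,
  [/\ PM M, g \in M, bich g, inc g x & forall e, e \in M -> e != g -> mono e].
Proof.
have [HM [_ Hr]] := HW; have [g [ig cg]] := Hr x.
have bg : bich g.
  rewrite bichE; apply/negP=> mg; have [h1 h2] := Hmb mg.
  by move: ig cg; rewrite /incident => /orP[] /eqP <-; rewrite ?h1 ?h2.
have [M [pm gM]] := HM g; exists M, g; split=> // e eM neg.
rewrite -[mono e]negbK -bichE; apply/negP=> be.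
by move/eqP: neg; apply; apply: (pm_bich_uniq (M := M)).
Qed.

Definition closedK (K : {set V}) := forall e, mono e -> (src e \in K) = (dst e \in K).

Lemma madj_sym : symmetric madj.
Proof.
move=> x y; apply/existsP/existsP=> [] [e /andP[m H]]; exists e;
by rewrite m /=; case/orP: H => ->; rewrite ?orbT.
Qed.

Lemma madj_e e : mono e -> madj (src e) (dst e).
Proof. by move=> m; apply/existsP; exists e; rewrite m !eqxx. Qed.

Lemma comp_closed x : closedK [set y | connect madj x y].
Proof.
move=> e m; rewrite !inE; apply/idP/idP=> H; apply: connect_trans H _; apply: connect1.
  exact: madj_e.
by rewrite madj_sym; apply: madj_e.
Qed.

Lemma comp_eq x x' v : connect madj x v -> connect madj x' v ->
  [set y | connect madj x y] = [set y | connect madj x' y].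
Proof.
move=> h h'; have S := sym_connect_sym madj_sym.
apply/setP=> y; rewrite !inE; apply/idP/idP=> H.
  apply: connect_trans h' _; apply: connect_trans H; by rewrite S.
apply: connect_trans h _; apply: connect_trans H; by rewrite S.
Qed.

Lemma parity M g K : PM M -> g \in M -> (forall e, e \in M -> e != g -> mono e) ->
  closedK K -> odd #|K| = (src g \in K) (+) (dst g \in K).
Proof.
move=> pm gM Hm cK; rewrite (count_K Hloop K pm) (bigD1 g) //= oddD.
rewrite (eq_bigr (fun e => (src e \in K) * 2)); last first.
  by move=> e /andP[eM neg]; rewrite -(cK e (Hm e eM neg)) muln2 addnn.
by rewrite -big_distrl /= oddM andbF addbF oddD !oddb.
Qed.

Definition nocross (M : {set E}) (K : {set V}) :=
  forall e, e \in M -> (src e \in K) = (dst e \in K).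

Lemma inc_in (K : {set V}) e v : (src e \in K) = (dst e \in K) -> inc e v ->
  (v \in K) = (src e \in K).
Proof. by move=> H /orP[] /eqP <-. Qed.

Lemma combine K M1 M2 : PM M1 -> PM M2 -> nocross M1 K -> nocross M2 K ->
  PM ([set e in M1 | src e \in K] :|: [set e in M2 | src e \notin K]).
Proof.
move=> p1 p2 n1 n2; apply: pmA_intro.
- by move=> e _ v; rewrite in_set0.
- move=> v _; case vK: (v \in K).
    have [e eM ie] := pm_ex v p1; exists e => //.
    by rewrite !inE eM -(inc_in (n1 e eM) ie) vK.
  have [e eM ie] := pm_ex v p2; exists e => //.
  by rewrite !inE eM -(inc_in (n2 e eM) ie) vK orbT.
- move=> v e1 e2 _; rewrite !inE.
  case vK: (v \in K).
    move=> /orP[/andP[m1 s1]|/andP[m1 s1]] /orP[/andP[m2 s2]|/andP[m2 s2]] i1 i2;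
      first (by apply: (pm_uniq (v := v)) p1 _ _ _ _);
      by move: s1 s2; rewrite -?(inc_in (n1 _ m1) i1) -?(inc_in (n2 _ m1) i1)
        -?(inc_in (n1 _ m2) i2) -?(inc_in (n2 _ m2) i2) vK.
  move=> /orP[/andP[m1 s1]|/andP[m1 s1]] /orP[/andP[m2 s2]|/andP[m2 s2]] i1 i2;
    last (by apply: (pm_uniq (v := v)) p2 _ _ _ _);
    by move: s1 s2; rewrite -?(inc_in (n1 _ m1) i1) -?(inc_in (n2 _ m1) i1)
      -?(inc_in (n1 _ m2) i2) -?(inc_in (n2 _ m2) i2) vK.
Qed.

Lemma nocross_even M g K : PM M -> g \in M -> (forall e, e \in M -> e != g -> mono e) ->
  closedK K -> ~~ odd #|K| -> nocross M K.
Proof.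
move=> pm gM Hm cK ev e eM; case: (eqVneq e g) => [->|neq]; last exact: cK (Hm e eM neq).
move: ev; rewrite (parity pm gM Hm cK).
by case: (src g \in K); case: (dst g \in K).
Qed.

Lemma odd_comp x x' : [set y | connect madj x y] != [set y | connect madj x' y] ->
  odd #|[set y | connect madj x y]|.
Proof.
set X := [set y | connect madj x y]; set X' := [set y | connect madj x' y] => neq.
case oX: (odd #|X|) => //; exfalso.
have [M [g [pm gM bg ig Hm]]] := red_pm x.
have [M' [g' [pm' gM' bg' ig' Hm']]] := red_pm x'.
have cX := comp_closed x.
have n1 := nocross_even pm gM Hm cX (negbT oX).
have n2 := nocross_even pm' gM' Hm' cX (negbT oX).
have pm'' := combine pm pm' n1 n2.
have xX : x \in X by rewrite inE connect0.
have x'X : x' \notin X.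
  apply/negP; rewrite inE => h; move/eqP: neq; apply.
  by apply: (comp_eq h); apply: connect0.
have sg : src g \in X by rewrite -(inc_in (n1 g gM) ig).
have sg' : src g' \notin X by rewrite -(inc_in (n2 g' gM') ig').
have e : g = g'.
  apply: (pm_bich_uniq pm'') => //; apply/setUP.
    by left; apply/setIdP.
  by right; apply/setIdP.
by move: sg sg'; rewrite e => ->.
Qed.

Lemma mono_in K e w : closedK K -> mono e -> inc e w -> w \in K -> (src e \in K) && (dst e \in K).
Proof.
move=> cK m ie h; rewrite -(cK e m) andbb.
by case/orP: ie => /eqP Ew; [rewrite Ew | rewrite (cK e m) Ew].
Qed.

Lemma end_uniq (X X' : {set V}) (disj : forall v, v \in X -> v \in X' -> False)
  (cross : forall f, bich f -> (src f \in X) && (dst f \in X') || (src f \in X') && (dst f \in X))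
  f a b : bich f -> inc f a -> inc f b -> a \in X -> b \in X -> a = b.
Proof.
move=> bf ia ib aX bX; case: (eqVneq a b) => // nab; exfalso.
have [sX dX] : src f \in X /\ dst f \in X.
  by move: ia ib nab aX bX => /orP[]/eqP<- /orP[]/eqP<-; rewrite ?eqxx //= => _ h1 h2; split.
by case/orP: (cross _ bf) => /andP[h1 h2]; [exact: disj dX h2 | exact: disj sX h1].
Qed.

Section Final.
Variables X X' : {set V}.
Hypotheses (cX : closedK X) (cX' : closedK X')
  (disj : forall v, v \in X -> v \in X' -> False)
  (cross : forall f, bich f -> (src f \in X) && (dst f \in X') || (src f \in X') && (dst f \in X))
  (cover : forall v, (v \in X) || (v \in X')).


Lemma notX' w : w \in X -> (w \in X') = false.
Proof. by move=> h; apply/negP; apply: disj. Qed.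

Lemma case_diff u v : u \in X -> v \in X' ->
  exists M, perfect_matching_avoiding src dst [set u; v] M.
Proof.
move=> uX vX'.
have [Mu [gu [pu guM bgu igu Hu]]] := red_pm u.
have [Mv [gv [pv gvM bgv igv Hv]]] := red_pm v.
exists ([set e in Mu | (e != gu) && (src e \in X)] :|: [set e in Mv | (e != gv) && (src e \in X')]).
have claim : forall w e, e \in [set e in Mu | (e != gu) && (src e \in X)] :|:
    [set e in Mv | (e != gv) && (src e \in X')] -> inc e w ->
    if w \in X then (e \in Mu) && (e != gu) else (e \in Mv) && (e != gv).
  move=> w e; rewrite in_setU => /orP[/setIdP[eM /andP[n sX]]|/setIdP[eM /andP[n sX]]] ie.
    have mo := Hu e eM n; have dX : dst e \in X by rewrite -(cX mo).
    by move: ie => /orP[]/eqP<-; rewrite ?sX ?dX eM n.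
  have mo := Hv e eM n; have dX : dst e \in X' by rewrite -(cX' mo).
  have nX : forall y, y \in X' -> (y \in X) = false by move=> y h; apply/negP=> h'; apply: (disj h' h).
  by move: ie => /orP[]/eqP<-; rewrite ?(nX _ sX) ?(nX _ dX) eM n.
apply: pmA_intro.
- move=> e eM w; rewrite !inE => /orP[]/eqP-> ; apply/negP=> ie; have := claim _ _ eM ie.
    rewrite uX => /andP[mo n]; move/eqP: n; apply; exact: (pm_uniq pu mo guM ie igu).
  case: ifP => vX; first by move=> _; apply: (disj vX vX').
  move=> /andP[mo n]; move/eqP: n; apply; exact: (pm_uniq pv mo gvM ie igv).
- move=> w; rewrite !inE negb_or => /andP[wu wv].
  case wX: (w \in X).
    have [e eM ie] := pm_ex w pu; exists e => //.
    have n : e != gu by apply/eqP=> h; move/eqP: wu; apply; apply: (end_uniq disj cross bgu) => //; rewrite -h.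
    have mo := Hu e eM n; apply/setUP; left; apply/setIdP; split => //.
    by rewrite n /=; case/andP: (mono_in cX mo ie wX).
  have wX' : w \in X' by have := cover w; rewrite wX.
  have [e eM ie] := pm_ex w pv; exists e => //.
  have n : e != gv.
    apply/eqP=> h; move/eqP: wv; apply.
    have cr' : forall f, bich f -> (src f \in X') && (dst f \in X) || (src f \in X) && (dst f \in X').
      by move=> f bf; rewrite orbC; apply: cross.
    have igw : inc gv w by rewrite -h.
    have dj' : forall y, y \in X' -> y \in X -> False by move=> y a b; apply: (disj b a).
    exact: (end_uniq dj' cr' bgv igw igv wX' vX').
  have mo := Hv e eM n; apply/setUP; right; apply/setIdP; split => //.
  by rewrite n /=; case/andP: (mono_in cX' mo ie wX').
- move=> w e1 e2 _ m1 m2 i1 i2; have := claim _ _ m1 i1; have := claim _ _ m2 i2.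
  case: ifP => _ /andP[h1 _] /andP[h2 _].
    exact: (pm_uniq pu h2 h1 i1 i2).
  exact: (pm_uniq pv h2 h1 i1 i2).
Qed.

Lemma case_same u v : u != v -> u \in X -> v \in X ->
  exists M, perfect_matching_avoiding src dst [set u; v] M.
Proof.
move=> nuv uX vX.
have nX : forall y, y \in X' -> (y \in X) = false by move=> y h; apply/negP=> h'; apply: (disj h' h).
have [Mu [gu [pu guM bgu igu Hu]]] := red_pm u.
have [ev evM iev] := pm_ex v pu.
have evgu : ev != gu.
  apply/eqP=> h; move/eqP: nuv; apply; rewrite h in iev.
  exact: (end_uniq disj cross bgu igu iev uX vX).
have mev := Hu ev evM evgu.
set x := if src ev == v then dst ev else src ev.
have ix : inc ev x by rewrite /x /incident; case: ifP; rewrite eqxx ?orbT.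
have ends : forall w, inc ev w -> (w = v) \/ (w = x).
  move=> w /orP[]/eqP <-; rewrite /x; case: ifP => /eqP h; auto.
  by left; move: iev; rewrite /incident => /orP[]/eqP.
have xv : x != v.
  rewrite /x; case: ifP => [/eqP <-|->] //; rewrite eq_sym; apply: Hloop.
have xX : x \in X by case/andP: (mono_in cX mev iev vX) => a b; rewrite /x; case: ifP.
have xu : x != u.
  apply/eqP=> h; rewrite h in ix; move/eqP: evgu; apply.
  exact: (pm_uniq pu evM guM ix igu).
have [Mx [gx [px gxM bgx igx Hx]]] := red_pm x.
pose A := [set e in Mu | (e != gu) && (e != ev) && (src e \in X)].
pose B := [set e in Mx | (e == gx) || (src e \in X')].
exists (A :|: B).
have claim : forall w e, e \in A :|: B -> inc e w ->
    if (w \in X) && (w != x) then e \in Mu else e \in Mx.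
  move=> w e; rewrite in_setU => /orP[/setIdP[eM /andP[/andP[n1 n2] sX]]|/setIdP[eM H]] ie.
    have mo := Hu e eM n1; have dX : dst e \in X by rewrite -(cX mo).
    have wX : w \in X by case/orP: ie => /eqP<-.
    rewrite wX /=; case: (w =P x) => [Ew|//]; rewrite Ew in ie.
    by move/eqP: n2; case; apply: (pm_uniq pu eM evM ie ix).
  case: (w \in X) / idP => [wX|] //=; case: (w =P x) => //= /eqP nwx.
  case: (eqVneq e gx) => [Eg|neg].
    by move/eqP: nwx; case; rewrite Eg in ie; apply: (end_uniq disj cross bgx ie igx wX xX).
  rewrite (negbTE neg) /= in H; have mo := Hx e eM neg.
  have dX : dst e \in X' by rewrite -(cX' mo).
  by exfalso; case/orP: ie => /eqP Ew; apply: (disj wX); rewrite -Ew.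
apply: pmA_intro.
- move=> e eM w; rewrite !inE => /orP[]/eqP-> ; apply/negP=> ie.
    have ux : u != x by rewrite eq_sym.
    move: (claim _ _ eM ie); rewrite uX ux /= => eMu.
    move: eM; rewrite in_setU => /orP[/setIdP[_ /andP[/andP[n1 _] _]]|/setIdP[eMx H]].
      by move/eqP: n1; apply; apply: (pm_uniq pu eMu guM ie igu).
    case: (eqVneq e gx) => [Eg|neg].
      by move/eqP: xu; apply; rewrite Eg in ie; apply: (end_uniq disj cross bgx igx ie xX uX).
    rewrite (negbTE neg) /= in H; have mo := Hx e eMx neg.
    have dX : dst e \in X' by rewrite -(cX' mo).
    by case/orP: ie => /eqP Ew; apply: (disj uX); rewrite -Ew.
  have vx : v != x by rewrite eq_sym.
  move: (claim _ _ eM ie); rewrite vX vx /= => eMu.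
  move: eM; rewrite in_setU => /orP[/setIdP[_ /andP[/andP[_ n2] _]]|/setIdP[eMx H]].
    by move/eqP: n2; apply; apply: (pm_uniq pu eMu evM ie iev).
  case: (eqVneq e gx) => [Eg|neg].
    by move/eqP: xv; apply; rewrite Eg in ie; apply: (end_uniq disj cross bgx igx ie xX vX).
  rewrite (negbTE neg) /= in H; have mo := Hx e eMx neg.
  have dX : dst e \in X' by rewrite -(cX' mo).
  by case/orP: ie => /eqP Ew; apply: (disj vX); rewrite -Ew.
- move=> w; rewrite !inE negb_or => /andP[wu wv].
  case wX: (w \in X).
    case: (w =P x) => [->|/eqP nwx].
      by exists gx => //; apply/setUP; right; apply/setIdP; rewrite gxM eqxx.
    have [e eM ie] := pm_ex w pu; exists e => //.
    have n1 : e != gu by apply/eqP=> h; move/eqP: wu; apply; apply: (end_uniq disj cross bgu) => //; rewrite -h.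
    have n2 : e != ev by apply/eqP=> h; rewrite h in ie; case: (ends w ie) => Ew; [move/eqP: wv | move/eqP: nwx].
    have mo := Hu e eM n1; apply/setUP; left; apply/setIdP; split => //.
    by rewrite n1 n2 /=; case/andP: (mono_in cX mo ie wX).
  have wX' : w \in X' by have := cover w; rewrite wX.
  have [e eM ie] := pm_ex w px; exists e => //.
  apply/setUP; right; apply/setIdP; split => //.
  case: (eqVneq e gx) => [->|neg]; first by rewrite ?eqxx.
  have mo := Hx e eM neg.
  by case/andP: (mono_in cX' mo ie wX') => ->; rewrite ?orbT.
- move=> w e1 e2 _ m1 m2 i1 i2; have := claim _ _ m1 i1; have := claim _ _ m2 i2.
  case: ifP => _ h2 h1.
    exact: (pm_uniq pu h1 h2 i1 i2).
  exact: (pm_uniq px h1 h2 i1 i2).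
Qed.

End Final.
End W.

Theorem mainTheorem11 (V E : finType) (src dst : E -> V) (c : E -> V -> bool)
  (X X' : {set V}) :
  loopless src dst ->
  mono_blue src dst c ->
  W_state src dst c ->
  mcomponent src dst c X -> mcomponent src dst c X' -> X != X' ->
  3 <= minn #|X| #|X'| ->
  bicritical src dst.
Proof.
move=> Hl Hmb HW [x EX] [x' EX'] neq Hmin.
have oX : odd #|X| by rewrite EX; apply: (odd_comp Hl Hmb HW (x' := x')); rewrite -EX -EX'.
have oX' : odd #|X'| by rewrite EX'; apply: (odd_comp Hl Hmb HW (x' := x)); rewrite -EX -EX' eq_sym.
have cX : closedK src dst c X by rewrite EX; apply: comp_closed.
have cX' : closedK src dst c X' by rewrite EX'; apply: comp_closed.
have disj : forall v, v \in X -> v \in X' -> False.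
  move=> v; rewrite EX EX' !inE => h h'; move/eqP: neq; apply.
  by rewrite EX EX'; apply: comp_eq h h'.
have nd : forall y, y \in X -> (y \in X') = false.
  by move=> y h; apply/negP; apply: disj.
have nd' : forall y, y \in X' -> (y \in X) = false.
  by move=> y h; apply/negP=> h'; case: (disj _ h' h).
have cross : forall f, bichromatic src dst c f ->
    (src f \in X) && (dst f \in X') || (src f \in X') && (dst f \in X).
  move=> f bf; have [HM _] := HW; have [M [pm fM]] := HM f.
  have Hm : forall e, e \in M -> e != f -> monochromatic src dst c e.
    move=> e eM nef; rewrite /monochromatic; apply/negP => /negP be; move/eqP: nef; apply.
    exact: (pm_bich_uniq HW pm eM fM be bf).
  move: (parity Hl pm fM Hm cX) (parity Hl pm fM Hm cX'); rewrite oX oX'.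
  case sX: (src f \in X); case dX: (dst f \in X) => //= _.
    by rewrite (nd _ sX); case: (dst f \in X').
  by rewrite (nd _ dX); case: (src f \in X').
have cover : forall v, (v \in X) || (v \in X').
  move=> v; have [M [g [_ _ bg ig _]]] := red_pm Hmb HW v.
  by case/orP: (cross g bg) => /andP[h1 h2]; case/orP: ig => /eqP <-; rewrite ?h1 ?h2 ?orbT.
have disj2 : forall v, v \in X' -> v \in X -> False by move=> v a b; case: (disj _ b a).
have cross2 : forall f, bichromatic src dst c f ->
    (src f \in X') && (dst f \in X) || (src f \in X) && (dst f \in X').
  by move=> f bf; rewrite orbC; apply: cross.
have cover2 : forall v, (v \in X') || (v \in X) by move=> v; rewrite orbC.
split.
  move: Hmin; rewrite leq_min => /andP[h1 h2].
  have I0 : X :&: X' = set0.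
    by apply/setP=> y; rewrite !inE; apply/negP=> /andP[a b]; case: (disj _ a b).
  apply: (@leq_trans (#|X| + #|X'|)); first exact: leq_trans _ (leq_add h1 h2).
  by rewrite -cardsUI I0 cards0 addn0; apply: max_card.
move=> u v nuv.
case/orP: (cover u) => uX; case/orP: (cover v) => vX.
- exact: (case_same Hl Hmb HW cX cX' disj cross cover nuv uX vX).
- exact: (case_diff Hmb HW cX cX' disj cross cover uX vX).
- exact: (case_diff Hmb HW cX' cX disj2 cross2 cover2 uX vX).
- exact: (case_same Hl Hmb HW cX' cX disj2 cross2 cover2 nuv uX vX).
Qed.
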